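(* Let $G$ be Boidol's group and let $(O_{\rho_k,\lambda_k})_{k\in\mathbb{N}}$ be a properly converging sequence in $\Gamma_3\subset\mathfrak{g}^*/G$ (with $\rho_k\in\mathbb{R}$, $\lambda_k\neq0$) such that $\lim_{k\to\infty}\lambda_k=0$. Then: (1) the sequence $\omega_k:=\rho_k\lambda_k$ converges to some $\omega\in\mathbb{R}$; (2) if $\omega\neq0$, the limit set of the sequence is the two-point set $\{O_{\omega,-1,0},O_{-\omega,1,0}\}$; (3) if $\omega=0$, the limit set of the sequence is $\Gamma_1\cup\Gamma_0$.
   Context: Boidol's group $G$ is the simply connected Lie group with Lie algebra $\mathfrak{g}$ having basis $T,X,Y,Z$ and non-trivial brackets $[T,X]=-X$, $[T,Y]=Y$, $[X,Y]=Z$; concretely $G=\mathbb{R}^4$ with product $(t,x,y,z)\cdot(t',x',y',z')=(t+t',\,e^{t'}x+x',\,e^{-t'}y+y',\,z+z'+\tfrac12(e^{t'}xy'-e^{-t'}x'y))$. Write elements of $\mathfrak{g}^*$ as $aT^*+bX^*+cY^*+dZ^*$. The coadjoint orbits are exactly: for $\rho\in\mathbb{R},\lambda\neq0$, $O_{\rho,\lambda}=\{\frac{\rho\lambda+xy}{\lambda}T^*+xX^*+yY^*+\lambda Z^*: x,y\in\mathbb{R}\}$; for $(\alpha,\beta)\neq(0,0)$, $O_{\alpha,\beta,0}=\{uT^*+e^t\alpha X^*+e^{-t}\beta Y^*: t,u\in\mathbb{R}\}$; for $\tau\in\mathbb{R}$, the singletons $\{\tau T^*\}$. Let $\Gamma_3=\{O_{\rho,\lambda}:\lambda\neq0\}$,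 $\Gamma_1=\{O_{1,0,0},O_{-1,0,0},O_{0,1,0},O_{0,-1,0}\}$, $\Gamma_0=\{\{\tau T^*\}:\tau\in\mathbb{R}\}$. The orbit space $\mathfrak{g}^*/G$ has the quotient topology. The limit set of a sequence in $\mathfrak{g}^*/G$ is the set of all its limits; a sequence is properly converging if it has at least one limit and every subsequence has the same limit set as the whole sequence. *)

(* Defs.v *)
From Stdlib Require Import Reals.
Open Scope R_scope.

(* g^* identified with R^4: (a,b,c,d) stands for aT^* + bX^* + cY^* + dZ^*. *)
Definition gstar : Type := (R * R * R * R)%type.

Definition gpt (a b c d : R) : gstar := (a, b, c, d).

Definition gset := gstar -> Prop.

Definition open4 (U : gset) : Prop :=
  forall a b c d, U (gpt a b c d) ->
    exists eps, 0 < eps /\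
      forall a' b' c' d', Rabs (a' - a) < eps -> Rabs (b' - b) < eps ->
        Rabs (c' - c) < eps -> Rabs (d' - d) < eps -> U (gpt a' b' c' d').

Definition O3 (rho lambda : R) : gset :=
  fun p => exists x y, p = gpt ((rho * lambda + x * y) / lambda) x y lambda.

Definition O2 (alpha beta : R) : gset :=
  fun p => exists t u, p = gpt u (exp t * alpha) (exp (- t) * beta) 0.

Definition O0 (tau : R) : gset := fun p => p = gpt tau 0 0 0.

Definition Gamma3 (O : gset) : Prop :=
  exists rho lambda, lambda <> 0 /\ O = O3 rho lambda.
Definition Gamma1 (O : gset) : Prop :=
  O = O2 1 0 \/ O = O2 (-1) 0 \/ O = O2 0 1 \/ O = O2 0 (-1).
Definition Gamma0 (O : gset) : Prop := exists tau, O = O0 tau.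

Definition is_orbit (O : gset) : Prop :=
  Gamma3 O \/ (exists alpha beta, (alpha <> 0 \/ beta <> 0) /\ O = O2 alpha beta)
  \/ Gamma0 O.

(* Quotient topology: a set U of orbits is open iff its preimage under the
   quotient map g^* -> g^*/G (the union of the orbits in U) is open. *)
Definition qopen (U : gset -> Prop) : Prop :=
  open4 (fun p => exists O, is_orbit O /\ U O /\ O p).

Definition orbit_converges (s : nat -> gset) (O : gset) : Prop :=
  is_orbit O /\
  forall U : gset -> Prop, qopen U -> U O ->
    exists N, forall k, (N <= k)%nat -> U (s k).

Definition limit_set (s : nat -> gset) : gset -> Prop :=
  fun O => orbit_converges s O.

Definition properly_converging (s : nat -> gset) : Prop :=
  (exists O, limit_set s O) /\
  forall phi : nat -> nat, (forall n, (phi n < phi (S n))%nat) ->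
    forall O, limit_set (fun n => s (phi n)) O <-> limit_set s O.

(* Main.v *)
Require Import Defs.
From Stdlib Require Import Reals Lra Lia FunctionalExtensionality PropExtensionality.
Open Scope R_scope.

Definition fD (p : gstar) : R := snd p.
Definition fW (p : gstar) : R :=
  fst (fst (fst p)) * snd p - snd (fst (fst p)) * snd (fst p).

Lemma gpt_inj a b c d a' b' c' d' :
  gpt a b c d = gpt a' b' c' d' -> a = a' /\ b = b' /\ c = c' /\ d = d'.
Proof. unfold gpt; intros H; injection H; intros; subst; auto. Qed.

Lemma O3_vals r l p : l <> 0 -> O3 r l p -> fD p = l /\ fW p = r * l.
Proof.
  intros Hl [x [y ->]]. unfold fD, fW, gpt; simpl. split; [reflexivity|]. field. auto.
Qed.

Lemma O2_vals al be p : O2 al be p -> fD p = 0 /\ fW p = - (al * be).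
Proof.
  intros [t [u ->]]. unfold fD, fW, gpt; simpl. split; [reflexivity|].
  rewrite exp_Ropp. assert (exp t > 0) by apply exp_pos. field. lra.
Qed.

Lemma O0_vals t p : O0 t p -> fD p = 0 /\ fW p = 0.
Proof. intros ->. unfold fD, fW, gpt; simpl. split; ring. Qed.

Lemma orbit_const O p q : is_orbit O -> O p -> O q -> fD p = fD q /\ fW p = fW q.
Proof.
  intros [[r [l [Hl ->]]] | [[al [be [_ ->]]] | [t ->]]] Hp Hq.
  - destruct (O3_vals _ _ _ Hl Hp), (O3_vals _ _ _ Hl Hq). split; congruence.
  - destruct (O2_vals _ _ _ Hp), (O2_vals _ _ _ Hq). split; congruence.
  - destruct (O0_vals _ _ Hp), (O0_vals _ _ Hq). split; congruence.
Qed.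

Lemma mem_O3 r l a x y : l <> 0 -> a * l = r * l + x * y -> O3 r l (gpt a x y l).
Proof.
  intros Hl H. exists x, y. unfold gpt. repeat f_equal. apply (Rmult_eq_reg_r l); auto.
  rewrite H. field. auto.
Qed.

Lemma cover a b c d : exists O, is_orbit O /\ O (gpt a b c d).
Proof.
  destruct (Req_dec d 0) as [Hd | Hd].
  - subst. destruct (Req_dec b 0) as [Hb|Hb]; [destruct (Req_dec c 0) as [Hc|Hc]|].
    + subst. exists (O0 a). split; [right; right; exists a; auto | reflexivity].
    + exists (O2 b c). split; [right; left; exists b, c; auto|].
      exists 0, a. rewrite Ropp_0, exp_0, !Rmult_1_l. reflexivity.
    + exists (O2 b c). split; [right; left; exists b, c; auto|].
      exists 0, a. rewrite Ropp_0, exp_0, !Rmult_1_l. reflexivity.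
  - exists (O3 ((a*d - b*c)/d) d). split.
    + left. exists ((a*d - b*c)/d), d. auto.
    + apply mem_O3; auto. field. auto.
Qed.

Lemma orbit_at_nonzero O a b c d : is_orbit O -> O (gpt a b c d) -> d <> 0 ->
  O = O3 ((a*d - b*c)/d) d.
Proof.
  intros [[r [l [Hl ->]]] | [[al [be [_ ->]]] | [t ->]]] Hp Hd.
  - destruct Hp as [x [y Hp]]. apply gpt_inj in Hp as (H1 & H2 & H3 & H4). subst.
    f_equal. field. auto.
  - destruct Hp as [t [u Hp]]. apply gpt_inj in Hp as (H1 & H2 & H3 & H4). contradiction.
  - apply gpt_inj in Hp as (H1 & H2 & H3 & H4). contradiction.
Qed.

Lemma same_orbit O1 O2' a b c d : is_orbit O1 -> is_orbit O2' -> O1 (gpt a b c d) ->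
  O2' (gpt a b c d) -> d <> 0 -> O1 = O2'.
Proof.
  intros. rewrite (orbit_at_nonzero O1 a b c d), (orbit_at_nonzero O2' a b c d); auto.
Qed.

Lemma orbit_nonempty O : is_orbit O -> exists p, O p.
Proof.
  intros [[r [l [Hl ->]]] | [[al [be [_ ->]]] | [t ->]]].
  - exists (gpt ((r*l + 0*0)/l) 0 0 l). exists 0, 0. reflexivity.
  - exists (gpt 0 (exp 0 * al) (exp (-0) * be) 0). exists 0, 0. reflexivity.
  - exists (gpt t 0 0 0). reflexivity.
Qed.

Lemma abs_tri x y z e1 e2 : Rabs (x-y) < e1 -> Rabs (y - z) < e2 -> Rabs (x - z) < e1+e2.
Proof. intros. unfold Rabs in *. repeat destruct Rcase_abs; lra. Qed.

Definition cont (g : gstar -> R) : Prop :=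
  forall a b c d eps, 0 < eps -> exists del, 0 < del /\
    forall a' b' c' d', Rabs (a'-a) < del -> Rabs (b'-b) < del -> Rabs (c'-c) < del ->
      Rabs (d'-d) < del -> Rabs (g (gpt a' b' c' d') - g (gpt a b c d)) < eps.

Lemma cont_fD : cont fD.
Proof. intros a b c d eps He. exists eps. split; auto. Qed.

Lemma sum6 x1 x2 x3 x4 x5 x6 :
  Rabs (x1+x2+x3+x4+x5+x6) <= Rabs x1 + Rabs x2 + Rabs x3 + Rabs x4 + Rabs x5 + Rabs x6.
Proof.
  repeat (eapply Rle_trans; [apply Rabs_triang|]; apply Rplus_le_compat_r). lra.
Qed.

Lemma cont_fW : cont fW.
Proof.
  intros a b c d eps He.
  set (S := Rabs a + Rabs b + Rabs c + Rabs d + 2).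
  assert (HS : 0 < S) by (unfold S; pose proof (Rabs_pos a); pose proof (Rabs_pos b);
     pose proof (Rabs_pos c); pose proof (Rabs_pos d); lra).
  exists (Rmin 1 (eps / (2 * S))). split.
  { apply Rmin_glb_lt; [lra|]. apply Rdiv_lt_0_compat; lra. }
  intros a' b' c' d' Ha Hb Hc Hd. unfold fW, gpt; simpl.
  set (del := Rmin 1 (eps / (2 * S))) in *.
  assert (H1 : del <= 1) by apply Rmin_l.
  assert (H2 : del <= eps / (2*S)) by apply Rmin_r.
  assert (H3 : del * S <= eps / 2).
  { apply (Rmult_le_compat_r S) in H2; [|lra].
    replace (eps / (2*S) * S) with (eps/2) in H2 by (field; lra). lra. }
  replace (a' * d' - b' * c' - (a * d - b * c)) with
    ((a'-a)*d + a*(d'-d) + (a'-a)*(d'-d) + - ((b'-b)*c) + - (b*(c'-c)) + - ((b'-b)*(c'-c)))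
    by ring.
  eapply Rle_lt_trans; [apply sum6|].
  rewrite !Rabs_Ropp, !Rabs_mult.
  set (EA := Rabs (a'-a)) in *. set (EB := Rabs (b'-b)) in *.
  set (EC := Rabs (c'-c)) in *. set (ED := Rabs (d'-d)) in *.
  assert (0 <= EA) by apply Rabs_pos. assert (0 <= EB) by apply Rabs_pos.
  assert (0 <= EC) by apply Rabs_pos. assert (0 <= ED) by apply Rabs_pos.
  pose proof (Rabs_pos a); pose proof (Rabs_pos b);
     pose proof (Rabs_pos c); pose proof (Rabs_pos d).
  assert (EA * Rabs d <= del * Rabs d) by (apply Rmult_le_compat_r; lra).
  assert (Rabs a * ED <= Rabs a * del) by (apply Rmult_le_compat_l; lra).
  assert (EA * ED <= del * 1) by (apply Rmult_le_compat; lra).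
  assert (EB * Rabs c <= del * Rabs c) by (apply Rmult_le_compat_r; lra).
  assert (Rabs b * EC <= Rabs b * del) by (apply Rmult_le_compat_l; lra).
  assert (EB * EC <= del * 1) by (apply Rmult_le_compat; lra).
  unfold S in H3. nra.
Qed.
Lemma abs_tri2 x y z e1 e2 : Rabs (x-y) < e1 -> Rabs (y - z) <= e2 -> Rabs (x - z) < e1+e2.
Proof. intros. unfold Rabs in *. repeat destruct Rcase_abs; lra. Qed.

Lemma inv_conv g (s : nat -> gset) O q v :
  (forall O' p p', is_orbit O' -> O' p -> O' p' -> g p = g p') -> cont g ->
  orbit_converges s O -> O q -> (forall k p, s k p -> g p = v k) -> Un_cv v (g q).
Proof.
  intros Hinv Hc [HO Hconv] Hq Hv eps Heps.
  set (U := fun O' : gset => exists p, O' p /\ Rabs (g p - g q) < eps).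
  assert (HU : qopen U).
  { unfold qopen, open4. intros a b c d [O' [HO' [[p0 [Hp0 Hlt]] Hp]]].
    assert (Heq : g (gpt a b c d) = g p0) by (eapply Hinv; eauto).
    destruct (Hc a b c d (eps - Rabs (g p0 - g q))) as [del [Hdel Hd]]; [lra|].
    exists del. split; auto. intros a' b' c' d' H1 H2 H3 H4.
    destruct (cover a' b' c' d') as [O'' [HO'' H'']].
    exists O''. split; [auto|split; [|auto]]. exists (gpt a' b' c' d'). split; auto.
    specialize (Hd a' b' c' d' H1 H2 H3 H4). rewrite Heq in Hd.
    replace eps with (eps - Rabs (g p0 - g q) + Rabs (g p0 - g q)) by ring.
    apply abs_tri2 with (y := g p0); auto; lra. }
  destruct (Hconv U HU) as [N HN]. { exists q. split; auto. unfold Rminus. rewrite Rplus_opp_r, Rabs_R0. auto. }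
  exists N. intros n Hn. destruct (HN n Hn) as [p [Hp Hlt]]. unfold R_dist.
  rewrite <- (Hv n p Hp). auto.
Qed.

Lemma approx (s : nat -> gset) O a b c d (xa xb xc xd : nat -> R) :
  is_orbit O -> O (gpt a b c d) ->
  Un_cv xa a -> Un_cv xb b -> Un_cv xc c -> Un_cv xd d ->
  (forall k, is_orbit (s k)) -> (forall k, s k (gpt (xa k) (xb k) (xc k) (xd k))) ->
  (forall k, xd k <> 0) -> orbit_converges s O.
Proof.
  intros HO Hp Ca Cb Cc Cd Hs Hm Hnz. split; auto. intros U HU HUO.
  destruct (HU a b c d) as [eps [Heps Hball]]. { exists O. auto. }
  destruct (Ca eps Heps) as [N1 H1]. destruct (Cb eps Heps) as [N2 H2].
  destruct (Cc eps Heps) as [N3 H3]. destruct (Cd eps Heps) as [N4 H4].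
  exists (N1 + N2 + N3 + N4)%nat. intros k Hk.
  destruct (Hball (xa k) (xb k) (xc k) (xd k)) as [O' [HO' [HU' HO'p]]];
  [apply H1; lia | apply H2; lia | apply H3; lia | apply H4; lia |].
  rewrite <- (same_orbit O' (s k) (xa k) (xb k) (xc k) (xd k)); auto.
Qed.

Lemma O2_scale s al be : O2 (exp s * al) (exp (-s) * be) = O2 al be.
Proof.
  apply functional_extensionality. intros p. apply propositional_extensionality.
  split; intros [t [u ->]].
  - exists (t + s), u. rewrite Ropp_plus_distr, !exp_plus. rewrite !Rmult_assoc. reflexivity.
  - exists (t - s), u. unfold Rminus. rewrite Ropp_plus_distr, Ropp_involutive, !exp_plus.
    assert (E : exp s * exp (-s) = 1) by (rewrite exp_Ropp; pose proof (exp_pos s); field; lra).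
    replace (exp t * exp (- s) * (exp s * al)) with (exp t * al)
      by (transitivity (exp t * al * (exp s * exp (-s))); [rewrite E; ring | ring]).
    replace (exp (- t) * exp s * (exp (- s) * be)) with (exp (-t) * be)
      by (transitivity (exp (-t) * be * (exp s * exp (-s))); [rewrite E; ring | ring]).
    reflexivity.
Qed.

Lemma O2_norm1 al be ga de : al * ga > 0 -> al * be = ga * de -> O2 al be = O2 ga de.
Proof.
  intros H1 H2. assert (al <> 0) by (intro; subst; lra).
  assert (ga <> 0) by (intro; subst; lra).
  assert (Hp : ga / al > 0).
  { replace (ga/al) with ((al*ga) / (al*al)) by (field; auto).
    apply Rdiv_lt_0_compat; auto. nra. }
  rewrite <- (O2_scale (ln (ga/al)) al be). rewrite exp_Ropp, exp_ln; auto.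
  replace (ga / al * al) with ga by (field; auto).
  replace (/ (ga / al) * be) with (al * be / ga) by (field; auto).
  rewrite H2. f_equal. field. auto.
Qed.

Lemma O2_norm2 al be ga de : be * de > 0 -> al * be = ga * de -> O2 al be = O2 ga de.
Proof.
  intros H1 H2. assert (be <> 0) by (intro; subst; lra).
  assert (de <> 0) by (intro; subst; lra).
  assert (Hp : de / be > 0).
  { replace (de/be) with ((be*de) / (be*be)) by (field; auto).
    apply Rdiv_lt_0_compat; auto. nra. }
  rewrite <- (O2_scale (- ln (de/be)) al be). rewrite Ropp_involutive, exp_Ropp, exp_ln; auto.
  replace (de / be * be) with de by (field; auto).
  replace (/ (de / be) * al) with (al * be / de) by (field; auto).
  rewrite H2. f_equal. field. auto.
Qed.

Lemma cv_affine u l al be : Un_cv u l -> Un_cv (fun k => al * u k + be) (al * l + be).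
Proof.
  intros H. apply CV_plus; [apply CV_mult; auto|]; intros e He; exists 0%nat; intros;
  unfold R_dist; rewrite Rminus_diag, Rabs_R0; auto.
Qed.

Lemma cv_const c : Un_cv (fun _ => c) c.
Proof. intros e He; exists 0%nat; intros; unfold R_dist; rewrite Rminus_diag, Rabs_R0; auto. Qed.

Lemma cv_eq u l l' : Un_cv u l -> l = l' -> Un_cv u l'.
Proof. intros; subst; auto. Qed.
Lemma O2_base al be : O2 al be (gpt 0 al be 0).
Proof. exists 0, 0. rewrite Ropp_0, exp_0, !Rmult_1_l. reflexivity. Qed.

Lemma classify O p : is_orbit O -> O p -> fD p = 0 ->
  (exists al be, (al <> 0 \/ be <> 0) /\ O = O2 al be /\ fW p = - (al * be)) \/
  (exists t, O = O0 t /\ fW p = 0).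
Proof.
  intros [[r [l [Hl ->]]] | [[al [be [Hab ->]]] | [t ->]]] Hp Hd.
  - destruct (O3_vals _ _ _ Hl Hp). congruence.
  - left. exists al, be. split; auto. split; auto. apply (O2_vals _ _ _ Hp).
  - right. exists t. split; auto. apply (O0_vals _ _ Hp).
Qed.

Lemma approx_O2 rho lambda al be : (forall k, lambda k <> 0) -> Un_cv lambda 0 ->
  (al <> 0 \/ be <> 0) -> Un_cv (fun k => rho k * lambda k) (- (al * be)) ->
  orbit_converges (fun k => O3 (rho k) (lambda k)) (O2 al be).
Proof.
  intros Hl Hlam Hab Hw.
  assert (Hor : is_orbit (O2 al be)) by (right; left; exists al, be; auto).
  assert (Hs : forall k, is_orbit (O3 (rho k) (lambda k))) by
    (intros k; left; exists (rho k), (lambda k); auto).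
  destruct (Req_dec al 0) as [Ha | Ha].
  - destruct Hab as [Hab | Hb]; [contradiction|].
    apply (approx _ _ 0 al be 0 (fun _ => 0) (fun k => (- / be) * (rho k * lambda k) + 0)
       (fun _ => be) lambda); auto using O2_base, cv_const.
    + eapply cv_eq; [apply cv_affine; eauto|]. field. auto.
    + intros k. apply mem_O3; auto. field. auto.
  - apply (approx _ _ 0 al be 0 (fun _ => 0) (fun _ => al)
       (fun k => (- / al) * (rho k * lambda k) + 0) lambda); auto using O2_base, cv_const.
    + eapply cv_eq; [apply cv_affine; eauto|]. field. auto.
    + intros k. apply mem_O3; auto. field. auto.
Qed.

Lemma approx_O0 rho lambda t : (forall k, lambda k <> 0) -> Un_cv lambda 0 ->
  Un_cv (fun k => rho k * lambda k) 0 ->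
  orbit_converges (fun k => O3 (rho k) (lambda k)) (O0 t).
Proof.
  intros Hl Hlam Hw.
  assert (Hor : is_orbit (O0 t)) by (right; right; exists t; auto).
  assert (Hs : forall k, is_orbit (O3 (rho k) (lambda k))) by
    (intros k; left; exists (rho k), (lambda k); auto).
  set (c := fun k => t * lambda k + (-1) * (rho k * lambda k)).
  assert (Hc : Un_cv c 0).
  { eapply cv_eq; [apply CV_plus; apply CV_mult; [apply cv_const|apply Hlam|apply cv_const|apply Hw]|]. ring. }
  set (x := fun k => sqrt (Rabs (c k))).
  set (y := fun k => if Rle_dec 0 (c k) then x k else - x k).
  assert (Hx : Un_cv x 0).
  { eapply cv_eq; [apply (continuity_seq sqrt (fun k => Rabs (c k)) (Rabs 0));
      [apply continuity_pt_sqrt, Rabs_pos | apply cv_cvabs, Hc]|].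
    rewrite Rabs_R0, sqrt_0. reflexivity. }
  assert (Hy : Un_cv y 0).
  { intros e He. destruct (Hx e He) as [N HN]. exists N. intros n Hn.
    specialize (HN n Hn). unfold R_dist in *. unfold y. destruct Rle_dec; auto.
    replace (- x n - 0) with (- (x n - 0)) by ring. rewrite Rabs_Ropp. auto. }
  apply (approx _ _ t 0 0 0 (fun _ => t) x y lambda); auto using cv_const.
  - reflexivity.
  - intros k. apply mem_O3; auto.
    assert (E : x k * y k = c k).
    { unfold y, x. destruct Rle_dec.
      - rewrite sqrt_sqrt by apply Rabs_pos. apply Rabs_pos_eq. auto.
      - replace (sqrt (Rabs (c k)) * - sqrt (Rabs (c k))) with (- (sqrt (Rabs (c k)) * sqrt (Rabs (c k)))) by ring.
        rewrite sqrt_sqrt by apply Rabs_pos. rewrite Rabs_left; lra. }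
    rewrite E. unfold c. ring.
Qed.

Theorem proposition2p3 (rho lambda : nat -> R) :
  (forall k, lambda k <> 0) ->
  properly_converging (fun k => O3 (rho k) (lambda k)) ->
  Un_cv lambda 0 ->
  exists omega : R,
    Un_cv (fun k => rho k * lambda k) omega /\
    (omega <> 0 ->
       forall O, limit_set (fun k => O3 (rho k) (lambda k)) O <->
                 (O = O2 omega (-1) \/ O = O2 (- omega) 1)) /\
    (omega = 0 ->
       forall O, limit_set (fun k => O3 (rho k) (lambda k)) O <->
                 (Gamma1 O \/ Gamma0 O)).
Proof.
  intros Hl [[O0' HO0] _] Hlam.
  assert (HvD : forall k p, O3 (rho k) (lambda k) p -> fD p = lambda k)
    by (intros k p Hp; apply (O3_vals _ _ _ (Hl k) Hp)).
  assert (HvW : forall k p, O3 (rho k) (lambda k) p -> fW p = rho k * lambda k)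
    by (intros k p Hp; apply (O3_vals _ _ _ (Hl k) Hp)).
  assert (HiD : forall O' p p', is_orbit O' -> O' p -> O' p' -> fD p = fD p')
    by (intros; eapply orbit_const; eauto).
  assert (HiW : forall O' p p', is_orbit O' -> O' p -> O' p' -> fW p = fW p')
    by (intros; eapply orbit_const; eauto).
  assert (Lim : forall O q, limit_set (fun k => O3 (rho k) (lambda k)) O -> O q ->
     fD q = 0 /\ Un_cv (fun k => rho k * lambda k) (fW q)).
  { intros O q HO Hq. split.
    - eapply UL_sequence; [|apply Hlam]. eapply inv_conv; eauto using cont_fD.
    - eapply inv_conv; eauto using cont_fW. }
  destruct (orbit_nonempty O0' (proj1 HO0)) as [q0 Hq0].
  destruct (Lim O0' q0 HO0 Hq0) as [_ Hcv].
  exists (fW q0). split; [exact Hcv|]. split.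
  - intros Hw O. split.
    + intros HO. destruct (orbit_nonempty O (proj1 HO)) as [q Hq].
      destruct (Lim O q HO Hq) as [HqD HqW].
      pose proof (UL_sequence _ _ _ HqW Hcv) as Eq.
      destruct (classify O q (proj1 HO) Hq HqD) as [[al [be [Hab [-> Hv]]]] | [t [-> Hv]]].
      * assert (Hal : al <> 0) by (intro; subst; apply Hw; rewrite <- Eq, Hv; ring).
        assert (Hp : al * fW q0 <> 0) by (apply Rmult_integral_contrapositive; auto).
        destruct (Rlt_dec 0 (al * fW q0)).
        -- left. apply O2_norm1; [lra|]. rewrite <- Eq, Hv. ring.
        -- right. apply O2_norm1; [lra|]. rewrite <- Eq, Hv. ring.
      * exfalso. apply Hw. rewrite <- Eq, Hv. reflexivity.
    + intros [-> | ->]; apply approx_O2; auto; eapply cv_eq; eauto; ring.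
  - intros Hw O. split.
    + intros HO. destruct (orbit_nonempty O (proj1 HO)) as [q Hq].
      destruct (Lim O q HO Hq) as [HqD HqW].
      pose proof (UL_sequence _ _ _ HqW Hcv) as Eq.
      destruct (classify O q (proj1 HO) Hq HqD) as [[al [be [Hab [-> Hv]]]] | [t [-> Hv]]].
      * left. assert (Hp : al * be = 0) by lra.
        destruct (Req_dec al 0) as [Ha | Ha].
        -- destruct Hab as [|Hb]; [contradiction|]. subst al.
           destruct (Rlt_dec 0 be).
           ++ right; right; left. apply O2_norm2; lra.
           ++ right; right; right. apply O2_norm2; [assert (be < 0) by lra; lra| lra].
        -- assert (be = 0) by (destruct (Rmult_integral _ _ Hp); [contradiction|auto]). subst be.
           destruct (Rlt_dec 0 al).
           ++ left. apply O2_norm1; lra.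
           ++ right; left. apply O2_norm1; [assert (al < 0) by lra; lra| lra].
      * right. exists t. reflexivity.
    + intros [G1 | [t ->]].
      * destruct G1 as [-> | [-> | [-> | ->]]]; apply approx_O2; auto; try lra;
          eapply cv_eq; eauto; rewrite Hw; ring.
      * apply approx_O0; auto. rewrite <- Hw. auto.
Qed.
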